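(* Suppose $\Gamma$ satisfies (1) the Moser–Harnack inequality with constant $C_H$ and (2) the exit time upper bound with constant $c$. Let $x\in\mathbb V$, $r\ge1$, and let $f:\mathbb V\to[0,\infty)$ satisfy $-\Delta f(y)\le1$ for all $y\in B(x,2r)$. Then there is a constant $c_2$ depending only on $C_H$ and $c$ such that $$\sum_{y\in B(x,2r)}f(y)^2\ge(2C_H)^{-1}|B(x,2r)|\Big(\sup_{y\in B(x,r)}f(y)^2-c_2r^4\Big).$$
   Context: $\Gamma=(\mathbb V,\mathcal E)$ is a connected simple unweighted graph with bounded degrees, $\deg(x)=\#\{y:y\sim x\}$, $d_0$ the shortest-path metric, $B(x,r)=\{y:d_0(x,y)\le r\}$. The Laplacian is $\Delta f(x)=\sum_{y\sim x}(f(y)-f(x))$. For a finite set $B$, the Dirichlet Laplacian $-\Delta^B$ is the matrix on $\ell^2(B)$ with entries $(-\Delta^B)(x,y)=\deg(x)\delta_{xy}-\mathbf 1_{x\sim y}$, $x,y\in B$ (equivalently $\Delta$ applied to functions extended by zero outside $B$). Moser–Harnack inequality: for all $x\in\mathbb V$, $r>0$ and every $g\ge0$ with $-\Delta g\le0$ on $B(x,2r)$, $\sup_{y\in B(x,r)}g(y)^2\le\frac{C_H}{|B(x,2r)|}\sum_{y\in B(x,2r)}g(y)^2$. Exit time upper bound: for all $x\in\mathbb V$, $r\ge1$ and $B=B(x,r)$, $(-\Delta^B)^{-1}\mathbf 1_B(x)\le cr^2$. *)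

(* Defs.v *)
From HB Require Import structures.
From mathcomp Require Import all_boot all_order all_algebra.
From mathcomp Require Import reals.
Set Implicit Arguments. Unset Strict Implicit. Unset Printing Implicit Defensive.
Import Order.TTheory GRing.Theory Num.Theory.
Local Open Scope ring_scope.

(* A graph on a vertex type V (possibly infinite) is given by its
   neighbourhood lists: y ~ x  iff  y \in nbrs x. *)

Definition simple_graph (V : eqType) (nbrs : V -> seq V) : Prop :=
  (forall x, uniq (nbrs x)) /\ (forall x, x \notin nbrs x) /\
  (forall x y, (y \in nbrs x) = (x \in nbrs y)).

Definition bounded_degree (V : eqType) (nbrs : V -> seq V) : Prop :=
  exists D : nat, forall x, (size (nbrs x) <= D)%N.

Definition deg (V : eqType) (nbrs : V -> seq V) (x : V) : nat := size (nbrs x).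

(* Breadth-first enumeration of {y : d0(x,y) <= n} (without repetitions). *)
Fixpoint ballseq (V : eqType) (nbrs : V -> seq V) (x : V) (n : nat) : seq V :=
  match n with
  | 0 => [:: x]
  | n'.+1 => let s := ballseq nbrs x n' in
             undup (s ++ flatten [seq nbrs y | y <- s])
  end.

Definition connected_graph (V : eqType) (nbrs : V -> seq V) : Prop :=
  forall x y : V, exists n : nat, y \in ballseq nbrs x n.

Definition ball (R : realType) (V : eqType) (nbrs : V -> seq V) (x : V) (r : R)
  : seq V := ballseq nbrs x `|Num.floor r|%N.

Definition Lap (R : realType) (V : eqType) (nbrs : V -> seq V) (f : V -> R)
  (x : V) : R := \sum_(y <- nbrs x) (f y - f x).

(* sup over a finite nonempty list of a nonnegative quantity *)
Definition supl (R : realType) (V : eqType) (s : seq V) (F : V -> R) : R :=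
  \big[Num.max/0]_(y <- s) F y.

(* Dirichlet Laplacian -Delta^B as a matrix on l^2(B), with B enumerated by
   the duplicate-free list s (d is an irrelevant default vertex). *)
Definition dirLap (R : realType) (V : eqType) (nbrs : V -> seq V) (d : V)
  (s : seq V) : 'M[R]_(size s) :=
  \matrix_(i, j) ((deg nbrs (nth d s i))%:R * (i == j)%:R
                  - (nth d s j \in nbrs (nth d s i))%:R).

Definition moser_harnack (R : realType) (V : eqType) (nbrs : V -> seq V)
  (CH : R) : Prop :=
  forall (x : V) (r : R), 0 < r ->
  forall g : V -> R, (forall y, 0 <= g y) ->
    (forall y, y \in ball nbrs x (2 * r) -> - Lap nbrs g y <= 0) ->
    supl (ball nbrs x r) (fun y => g y ^+ 2)
      <= CH / (size (ball nbrs x (2 * r)))%:R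
         * \sum_(y <- ball nbrs x (2 * r)) g y ^+ 2.

(* Exit time upper bound with constant c:  (-Delta^B)^{-1} 1_B (x) <= c r^2,
   B = B(x,r), r >= 1 (including that -Delta^B is invertible). *)
Definition exit_time_bound (R : realType) (V : eqType) (nbrs : V -> seq V)
  (c : R) : Prop :=
  forall (x : V) (r : R), 1 <= r ->
    let s := ball nbrs x r in
    dirLap R nbrs x s \in unitmx /\
    forall i : 'I_(size s), nth x s i = x ->
      (invmx (dirLap R nbrs x s) *m (const_mx 1 : 'cV[R]_(size s))) i 0 <= c * r ^+ 2.

(* Main.v *)
Require Import Defs.
From HB Require Import structures.
From mathcomp Require Import all_boot all_order all_algebra.
From mathcomp Require Import reals.
From mathcomp Require Import zify.
From mathcomp Require Import ring lra.
Import Order.TTheory GRing.Theory Num.Theory.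
Local Open Scope ring_scope.

Lemma floor_add_abs (R : realType) (a b : R) : 0 <= a -> 0 <= b ->
  (`|Num.floor a| + `|Num.floor b| <= `|Num.floor (a + b)|)%N.
Proof.
move=> a0 b0.
have h : Num.floor a + Num.floor b <= Num.floor (a + b).
  by rewrite floor_ge_int intrD lerD // floor_le.
have ha : 0 <= Num.floor a by rewrite floor_ge0.
have hb : 0 <= Num.floor b by rewrite floor_ge0.
lia.
Qed.

Section G.
Variables (V : eqType) (nbrs : V -> seq V).

Lemma ballseqS x n y : (y \in ballseq nbrs x n.+1) =
  (y \in ballseq nbrs x n) || has (fun z => y \in nbrs z) (ballseq nbrs x n).
Proof.
rewrite /= mem_undup mem_cat; congr (_ || _).
apply/flattenP/hasP => [[t /mapP [z zin ->] yt]|[z zin yz]]; first by exists z.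
by exists (nbrs z) => //; apply/mapP; exists z.
Qed.

Lemma ballseq_self x n : x \in ballseq nbrs x n.
Proof. by elim: n => [|n IH]; rewrite ?inE // ballseqS IH. Qed.

Lemma ballseq_mon x m n : (m <= n)%N -> {subset ballseq nbrs x m <= ballseq nbrs x n}.
Proof.
move=> /subnK <-; elim: (n - m)%N => [//|k IH] y /IH yin.
by rewrite addSn ballseqS yin.
Qed.

Lemma ballseq_uniq x n : uniq (ballseq nbrs x n).
Proof. by case: n => [|n] //=; rewrite undup_uniq. Qed.

Lemma ballseq_trans {x w a} b {z} : w \in ballseq nbrs x a -> z \in ballseq nbrs w b ->
  z \in ballseq nbrs x (a + b).
Proof.
move=> wx; elim: b z => [|b IH] z; first by rewrite inE => /eqP ->; rewrite addn0.
rewrite ballseqS => /orP [/IH h|/hasP [v /IH vin zv]].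
  by rewrite addnS; exact: (ballseq_mon x _ _ (leqnSn (a+b)) _ h).
by rewrite addnS ballseqS; apply/orP; right; apply/hasP; exists v.
Qed.

Lemma ballseq_sym (sg : simple_graph nbrs) x y n :
  y \in ballseq nbrs x n -> x \in ballseq nbrs y n.
Proof.
case: sg => _ [_ sym].
elim: n x y => [|n IH] x y; first by rewrite !inE => /eqP ->.
rewrite ballseqS => /orP [/IH h|/hasP [v vin yv]].
  exact: (ballseq_mon y _ _ (leqnSn n) _ h).
have vy : v \in ballseq nbrs y 1 by rewrite ballseqS /= -sym yv orbT.
have := ballseq_trans _ vy (IH _ _ vin).
by rewrite add1n.
Qed.

End G.

Lemma sum_delta {R : realType} {n} (i : 'I_n) (F : 'I_n -> R) :
  \sum_j (i == j)%:R * F j = F i.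
Proof.
rewrite (bigD1 i) //= eqxx mul1r big1 ?addr0 // => j ji.
by rewrite eq_sym (negbTE ji) mul0r.
Qed.

Lemma sum_count {R : realType} {V : eqType} (a : V) (N : seq V) :
  \sum_(z <- N) ((a == z)%:R : R) = (count_mem a N)%:R.
Proof.
elim: N => [|z N IH]; first by rewrite big_nil.
by rewrite big_cons IH /= natrD eq_sym.
Qed.

Lemma argmin_seq {R : realType} {T : eqType} (F : T -> R) (s : seq T) a :
  a \in s -> exists2 m, m \in s & forall z, z \in s -> F m <= F z.
Proof.
elim: s a => [//|b s IH] a; rewrite inE => _.
case: s IH => [|c s] IH.
  by exists b; rewrite ?inE // => z; rewrite inE => /eqP ->.
have [m ms hm] := IH c (mem_head _ _).
case: (leP (F b) (F m)) => h.
  exists b; first exact: mem_head.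
  move=> z; rewrite inE => /orP [/eqP ->//|/hm]; exact: le_trans.
exists m; first by rewrite inE ms orbT.
move=> z; rewrite inE => /orP [/eqP ->|/hm //]; exact: ltW.
Qed.

Section M.
Variables (R : realType) (V : eqType) (nbrs : V -> seq V) (d : V) (s : seq V).
Hypothesis us : uniq s.
Hypothesis un : forall x, uniq (nbrs x).
Variable v : 'cV[R]_(size s).
Hypothesis hv : dirLap R nbrs d s *m v = const_mx 1.

Definition uf (z : V) : R := \sum_(i < size s) (nth d s i == z)%:R * v i 0.

Lemma uf_out z : z \notin s -> uf z = 0.
Proof.
move=> zs; rewrite /uf big1 // => i _.
case: eqP => [e|_]; last by rewrite mul0r.
by move: zs; rewrite -e mem_nth.
Qed.

Lemma uf_nth (i : 'I_(size s)) : uf (nth d s i) = v i 0.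
Proof.
rewrite /uf -[RHS](sum_delta i (fun j => v j 0)); apply: eq_bigr => j _.
by rewrite nth_uniq // eq_sym.
Qed.

Lemma uf_sum_nbrs y :
  \sum_(z <- nbrs y) uf z = \sum_(j < size s) (nth d s j \in nbrs y)%:R * v j 0.
Proof.
rewrite /uf exchange_big /=; apply: eq_bigr => j _.
by rewrite -big_distrl /= sum_count count_uniq_mem.
Qed.

Lemma uf_lap y : y \in s -> Lap nbrs uf y = -1.
Proof.
move=> ys; pose i : 'I_(size s) := Ordinal (etrans (index_mem y s) ys).
have yi : nth d s i = y by rewrite /= nth_index.
have := congr1 (fun A : 'cV[R]_(size s) => A i 0) hv; rewrite !mxE.

under eq_bigr do rewrite mxE mulrBl -mulrA.
rewrite sumrB -big_distrr /= sum_delta -uf_sum_nbrs -(uf_nth i) yi => e.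
rewrite /Lap sumrB big_const_seq count_predT iter_addr_0 -e /deg mulr_natl opprB.
by [].
Qed.


Lemma uf_ge0 y : y \in s -> 0 <= uf y.
Proof.
move=> ys; have [m ms hm] := argmin_seq uf _ _ ys.
apply: le_trans (hm _ ys); rewrite leNgt; apply/negP => neg.
have := uf_lap m ms; rewrite /Lap => e.
have : 0 <= \sum_(z <- nbrs m) (uf z - uf m).
  apply: sumr_ge0 => z _; rewrite subr_ge0.
  case zs: (z \in s); first exact: hm.
  by rewrite (uf_out z) ?zs //; apply: ltW.
by rewrite e ler0N1.
Qed.
End M.

Lemma supl_ge {R : realType} {V : eqType} (s : seq V) (F : V -> R) y :
  y \in s -> F y <= supl s F.
Proof.
rewrite /supl; elim: s => [//|a s IH]; rewrite inE big_cons => /orP [/eqP ->|/IH h].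
  by rewrite le_max lexx.
by rewrite le_max h orbT.
Qed.

Lemma supl_le {R : realType} {V : eqType} (s : seq V) (F : V -> R) B :
  0 <= B -> (forall y, y \in s -> F y <= B) -> supl s F <= B.
Proof.
move=> B0; rewrite /supl; elim: s => [|a s IH] h; first by rewrite big_nil.
rewrite big_cons ge_max h ?mem_head //=; apply: IH => y ys; apply: h; rewrite inE ys orbT.
by [].
Qed.

Lemma sub_harm {R : realType} {V : eqType} (nbrs : V -> seq V) (f u : V -> R) y :
  - Lap nbrs f y <= 1 -> Lap nbrs u y = -1 ->
  - Lap nbrs (fun z => Num.max (f z - u z) 0) y <= 0.
Proof.
move=> hf hu; rewrite oppr_le0 /Lap.
case: (leP 0 (f y - u y)) => h.

  apply: (@le_trans _ _ (\sum_(z <- nbrs y) ((f z - u z) - (f y - u y)))).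
    have : \sum_(z <- nbrs y) ((f z - u z) - (f y - u y)) =
           Lap nbrs f y - Lap nbrs u y.
      by rewrite /Lap -sumrB; apply: eq_bigr => z _; rewrite opprB addrA -[in RHS]addrA [in RHS]addrC; lra.
    move=> ->; move: hf; rewrite hu; lra.
  by apply: ler_sum => z _; rewrite lerD2r le_max lexx.
apply: sumr_ge0 => z _; rewrite subr0 le_max lexx orbT //.
Qed.

Lemma Lap_const {R : realType} {V : eqType} (nbrs : V -> seq V) (a : R) y :
  Lap nbrs (fun _ => a) y = 0.
Proof. by rewrite /Lap big1 // => z _; rewrite subrr. Qed.

Lemma sq_split {R : realType} {a b c : R} : 0 <= a -> a <= b + c ->
  a^+2 <= 2 * b^+2 + 2 * c^+2.
Proof.
move=> ? ?. have : 0 <= (b - c)^+2 by apply: sqr_ge0.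
have : a * a <= (b+c)*(b+c) by apply: ler_pM.
rewrite !expr2. nra.
Qed.

Theorem corollary2p5 (R : realType) (CH c : R) :
  exists c2 : R,
  forall (V : eqType) (nbrs : V -> seq V),
    simple_graph nbrs -> connected_graph nbrs -> bounded_degree nbrs ->
    moser_harnack nbrs CH -> exit_time_bound nbrs c ->
    forall (x : V) (r : R), 1 <= r ->
    forall f : V -> R, (forall y, 0 <= f y) ->
      (forall y, y \in ball nbrs x (2 * r) -> - Lap nbrs f y <= 1) ->
      \sum_(y <- ball nbrs x (2 * r)) f y ^+ 2 >=
        (2 * CH)^-1 * (size (ball nbrs x (2 * r)))%:R *
        (supl (ball nbrs x r) (fun y => f y ^+ 2) - c2 * r ^+ 4).
Proof.
exists (162 * c ^+ 2) => V nbrs sg _ _ mh et x r r1 f f0 hf.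
have r0 : 0 < r by lra.
set B2 := ball nbrs x (2 * r).
set N := (size B2)%:R : R.
have xB2 : x \in B2 by apply: ballseq_self.
have N0 : 0 < N by rewrite /N ltr0n; case: (B2) xB2.
have CH1 : 1 <= CH.
  have h1 : forall y, y \in ball nbrs x (2*r) -> - Lap nbrs (fun _ => 1:R) y <= 0.
    by move=> y _; rewrite Lap_const oppr0.
  have := mh x r r0 _ (fun _ => ler01) h1.
  rewrite big_const_seq count_predT iter_addr_0 expr1n -/B2 -/N.
  rewrite divfK ?gt_eqF //; apply: le_trans.
  apply: supl_ge; exact: ballseq_self.
have key : supl (ball nbrs x r) (fun y => f y ^+ 2) <=
    2 * (CH / N * \sum_(y <- B2) f y ^+ 2) + 162 * c ^+ 2 * r ^+ 4.
  apply: supl_le.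
    have sg0 : 0 <= \sum_(y <- B2) f y ^+ 2 by apply: sumr_ge0 => y _; apply: sqr_ge0.
    have : 0 <= CH / N by apply: divr_ge0; [lra | exact: ltW].
    have : 0 <= c ^+ 2 by apply: sqr_ge0.
    have : 0 <= r ^+ 4 by apply: exprn_ge0; lra.
    move=> h1 h2 h3; apply: addr_ge0; first by apply: mulr_ge0 => //; apply: mulr_ge0.
    by apply: mulr_ge0 => //; apply: mulr_ge0.
  move=> y0 y0in.
  have r3 : 1 <= 3 * r by lra.
  have [unit hb] := et y0 (3 * r) r3.
  set s := ball nbrs y0 (3 * r) in unit hb.
  set M := dirLap R nbrs y0 s in unit hb.
  set v := invmx M *m const_mx 1 in hb.
  have hv : M *m v = const_mx 1 by rewrite /v mulmxA mulmxV // mul1mx.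
  have us : uniq s by apply: ballseq_uniq.
  have un : forall z, uniq (nbrs z) by case: sg.
  pose u := @uf R V y0 s v.
  have sub : {subset B2 <= s}.
    move=> z zB.
    have xy := ballseq_sym _ _ sg _ _ _ y0in.
    have := ballseq_trans _ _ _ xy zB.
    apply: ballseq_mon.
    have -> : 3 * r = r + 2 * r by lra.
    by apply: floor_add_abs; lra.
  have hlap : forall z, z \in s -> Lap nbrs u z = -1.
    by move=> z zs; apply: (@uf_lap R V nbrs y0 s us un v hv).
  have hu0 : forall z, z \in s -> 0 <= u z.
    by move=> z zs; apply: (@uf_ge0 R V nbrs y0 s us un v hv).
  have y0s : y0 \in s by apply: ballseq_self.
  have huc : u y0 <= c * (3 * r) ^+ 2.
    pose i : 'I_(size s) := Ordinal (etrans (index_mem y0 s) y0s).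
    have yi : nth y0 s i = y0 by rewrite /= nth_index.
    by rewrite -{1}yi /u uf_nth //; apply: hb.
  pose g : V -> R := fun z => Num.max (f z - u z) 0.
  have g0 : forall z, 0 <= g z by move=> z; rewrite /g le_max lexx orbT.
  have H := mh x r r0 g g0 (fun y yB => sub_harm nbrs f u y (hf y yB) (hlap y (sub y yB))).
  have hs : \sum_(y <- B2) g y ^+ 2 <= \sum_(y <- B2) f y ^+ 2.
    rewrite big_seq [in X in _ <= X]big_seq; apply: ler_sum => z zB.
    have gf : g z <= f z.
      rewrite /g ge_max f0 andbT; have := hu0 z (sub z zB); lra.
    by rewrite !expr2; apply: ler_pM.
  have hg : g y0 ^+ 2 <= supl (ball nbrs x r) (fun y => g y ^+ 2).
    exact: (@supl_ge R V _ (fun y => g y ^+ 2) y0 y0in).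
  have hfy : f y0 <= g y0 + u y0.
    have : f y0 - u y0 <= g y0 by rewrite /g le_max lexx.
    lra.
  have e1 := sq_split (f0 y0) hfy.
  have hU : u y0 ^+ 2 <= (c * (3 * r) ^+ 2) ^+ 2.
    by rewrite !expr2; apply: ler_pM => //; apply: hu0.
  have hCN : 0 <= CH / N by apply: divr_ge0; [lra | exact: ltW].
  have hT : CH / N * \sum_(y <- B2) g y ^+ 2 <= CH / N * \sum_(y <- B2) f y ^+ 2.
    exact: ler_wpM2l.
  have -> : 162 * c ^+ 2 * r ^+ 4 = 2 * (c * (3 * r) ^+ 2) ^+ 2.
    by rewrite !exprMn; ring.
  move: H; rewrite -/B2 -/N => H.
  lra.
have k2 : supl (ball nbrs x r) (fun y => f y ^+ 2) - 162 * c ^+ 2 * r ^+ 4 <=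
    2 * (CH / N * \sum_(y <- B2) f y ^+ 2) by lra.
have pos : 0 <= (2 * CH)^-1 * N.
  by apply: mulr_ge0; [rewrite invr_ge0; lra | exact: ltW].
apply: le_trans (ler_wpM2l pos k2) _.
rewrite le_eqVlt; apply/orP; left; apply/eqP; field.
by apply/andP; split; [exact: lt0r_neq0 | apply/eqP; lra].
Qed.
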